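(* Let $n>2$ be a natural number and let $R$ be a de Groot continuum with two distinct points $b_1,b_2$. Let $Y_n=(\mathbb{Z}(n)\times R)/\rho$, where $\mathbb{Z}(n)=\mathbb{Z}/n\mathbb{Z}$ is discrete and $\rho$ is the equivalence relation whose only nontrivial identifications are $(k+n\mathbb{Z},b_2)\sim(k+1+n\mathbb{Z},b_1)$ for all $k\in\mathbb{Z}$. Then $Y_n$ is a continuum whose homeomorphism group $\mathcal{H}(Y_n)$ is isomorphic to the cyclic group $\mathbb{Z}/n\mathbb{Z}$; the isomorphism is given by letting $m\in\mathbb{Z}$ act via $\rho(k+n\mathbb{Z},x)\mapsto\rho(m+k+n\mathbb{Z},x)$.
   Context: A de Groot continuum (rigid continuum) is a compact connected metric space $R$ with more than one point such that every continuous map $R\to R$ is either the identity map or a constant map. $\mathcal{H}(Y)$ denotes the group of all homeomorphisms of a space $Y$ onto itself. The space $Y_n$ is the realisation of the directed $n$-cycle (Cayley graph of $(\mathbb{Z}(n),\{1+n\mathbb{Z}\})$) obtained by inserting a copy of $R$ into each oriented edge, $b_1$ glued to the origin and $b_2$ to the target. *)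

(* Defs.v *)
From HB Require Import structures.
From mathcomp Require Import all_boot all_algebra.
From Stdlib Require Import Reals Classical List.

Local Open Scope R_scope.

Definition topology (X : Type) := (X -> Prop) -> Prop.

Definition is_metric {X : Type} (d : X -> X -> R) : Prop :=
  (forall x y, 0 <= d x y) /\
  (forall x y, d x y = 0 <-> x = y) /\
  (forall x y, d x y = d y x) /\
  (forall x y z, d x z <= d x y + d y z).

Definition metric_open {X : Type} (d : X -> X -> R) : topology X :=
  fun U => forall x, U x -> exists eps, 0 < eps /\ forall y, d x y < eps -> U y.

Definition continuous {X Y : Type} (TX : topology X) (TY : topology Y)
  (f : X -> Y) : Prop :=
  forall V, TY V -> TX (fun x => V (f x)).

Definition compact {X : Type} (TX : topology X) : Prop :=
  forall F : (X -> Prop) -> Prop,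
    (forall U, F U -> TX U) ->
    (forall x, exists U, F U /\ U x) ->
    exists l : list (X -> Prop),
      (forall U, In U l -> F U) /\ (forall x, exists U, In U l /\ U x).

Definition connected {X : Type} (TX : topology X) : Prop :=
  forall U, TX U -> TX (fun x => ~ U x) -> (forall x, U x) \/ (forall x, ~ U x).

Definition metrizable {X : Type} (TX : topology X) : Prop :=
  exists d : X -> X -> R, is_metric d /\ forall U, TX U <-> metric_open d U.

Definition continuum {X : Type} (TX : topology X) : Prop :=
  compact TX /\ connected TX /\ metrizable TX.

Definition de_Groot_continuum {T : Type} (d : T -> T -> R) : Prop :=
  is_metric d /\ compact (metric_open d) /\ connected (metric_open d) /\
  (exists x y : T, x <> y) /\
  forall f : T -> T, continuous (metric_open d) (metric_open d) f ->
    (forall x, f x = x) \/ (exists c, forall x, f x = c).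

Definition discrete {X : Type} : topology X := fun _ => True.

Definition prod_topology {A B : Type} (TA : topology A) (TB : topology B)
  : topology (A * B) :=
  fun U => forall p, U p -> exists (V : A -> Prop) (W : B -> Prop),
     TA V /\ TB W /\ V (fst p) /\ W (snd p) /\
     forall a b, V a -> W b -> U (a, b).

Definition quot {X : Type} (rel : X -> X -> Prop) : Type :=
  { C : X -> Prop | exists x, C = rel x }.

Definition qmap {X : Type} (rel : X -> X -> Prop) (x : X) : quot rel :=
  exist (fun C => exists y, C = rel y) (rel x) (ex_intro (fun y => rel x = rel y) x (@Logic.eq_refl _ (rel x))).

Definition quot_topology {X : Type} (rel : X -> X -> Prop) (TX : topology X)
  : topology (quot rel) :=
  fun V => TX (fun x => V (qmap rel x)).

Definition homeomorphism {X : Type} (TX : topology X) (f : X -> X) : Prop :=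
  exists g : X -> X, (forall x, g (f x) = x) /\ (forall y, f (g y) = y) /\
    continuous TX TX f /\ continuous TX TX g.

Definition rho (n : nat) (T : Type) (b1 b2 : T) (p q : 'Z_n * T) : Prop :=
  p = q \/
  (snd p = b2 /\ snd q = b1 /\ fst q = GRing.add (fst p) (GRing.one _)) \/
  (snd p = b1 /\ snd q = b2 /\ fst p = GRing.add (fst q) (GRing.one _)).

Arguments rho n {T} b1 b2 p q.

Definition Yn (n : nat) (T : Type) (b1 b2 : T) : Type := quot (rho n b1 b2).

Arguments Yn n {T} b1 b2.

Definition Yn_topology (n : nat) (T : Type) (d : T -> T -> R) (b1 b2 : T)
  : topology (Yn n b1 b2) :=
  quot_topology (rho n b1 b2) (prod_topology (@discrete 'Z_n) (metric_open d)).

Arguments Yn_topology n {T} d b1 b2.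

(* Main.v *)
Require Import Defs.
From HB Require Import structures.
From mathcomp Require Import all_boot all_algebra.
From Stdlib Require Import Reals Classical List Lra Lia.
From mathcomp Require Import zify.
From Stdlib Require Import FunctionalExtensionality PropExtensionality ProofIrrelevance ClassicalEpsilon.
Import GRing.Theory.
Delimit Scope nat_scope with N.

Section Main.
Variables (n : nat) (T : Type) (d : T -> T -> R) (b1 b2 : T).
Hypothesis Hn : (2 < n)%N.
Hypothesis Hb : b1 <> b2.

Local Notation Z := 'Z_n.
Local Notation Yq := (Yn n b1 b2).
Local Notation q := (qmap (rho n b1 b2)).

Definition zs (k : Z) : Z := GRing.add k (GRing.one _).

Section ZL.
Local Open Scope ring_scope.
Lemma N_gt2 : (2 < (Zp_trunc n).+2)%N.
Proof. by move: Hn; case: n => [|[|[|m]]]. Qed.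

Lemma s_neq (k : Z) : zs k = k -> False.
Proof.
rewrite /zs => /(congr1 (fun z => z - k)). rewrite addrAC subrr add0r => /eqP.
by rewrite oner_eq0.
Qed.

Lemma two_neq0 : ((1 + 1 : Z) = 0) -> False.
Proof.
move=> /(congr1 val) /=. have := N_gt2.
move: (Zp_trunc n).+2 => N hN. rewrite !modn_small //; lia.
Qed.

Lemma s2_neq (k : Z) : zs (zs k) = k -> False.
Proof.
rewrite /zs -addrA => /(congr1 (fun z => z - k)). rewrite addrAC subrr add0r.
exact: two_neq0.
Qed.

Lemma zs_inj (a b : Z) : zs a = zs b -> a = b.
Proof. by rewrite /zs; apply: addIr. Qed.
End ZL.

Lemma rho_refl p : rho n b1 b2 p p.
Proof. by left. Qed.

Lemma rho_sym p p' : rho n b1 b2 p p' -> rho n b1 b2 p' p.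
Proof. case=> [->|[[? [? ?]]|[? [? ?]]]]; [left=> // | right; right | right; left]; done. Qed.

Lemma rho_trans p p' p'' : rho n b1 b2 p p' -> rho n b1 b2 p' p'' -> rho n b1 b2 p p''.
Proof.
case: p p' p'' => [k x] [l y] [m z] /=.
rewrite /rho /=.
case=> [[-> ->] //|[[-> [-> ->]]|[-> [-> ->]]]].
- case=> [[<- <-]|[[? _]|[_ [-> Hm]]]]; [by right; left| by case: Hb|].
  by left; have := zs_inj _ _ Hm => ->.
- case=> [[<- <-]|[[_ [-> Hm]]|[? _]]]; [by right; right| |by case: Hb].
  by left; rewrite Hm.
Qed.

Lemma qmap_eq p p' : q p = q p' <-> rho n b1 b2 p p'.
Proof.
split.
- move=> /(congr1 (@proj1_sig _ _)) /= E.
  have : rho n b1 b2 p' p' by left.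
  by rewrite -E.
- move=> H. rewrite /qmap.
  have E : rho n b1 b2 p = rho n b1 b2 p'.
    apply: functional_extensionality => r; apply: propositional_extensionality.
    split; [apply: rho_trans; apply: rho_sym|]; first done.
    by apply: rho_trans.
  move: (ex_intro _ p _) (ex_intro _ p' _). rewrite E => e1 e2.
  by rewrite (proof_irrelevance _ e1 e2).
Qed.

Lemma q_surj (y : Yq) : exists p, y = q p.
Proof.
case: y => C [p Hp]. exists p. rewrite /qmap. subst C.
by congr exist; apply: proof_irrelevance.
Qed.

Definition rep (y : Yq) : Z * T :=
  proj1_sig (constructive_indefinite_description _ (q_surj y)).

Lemma rep_spec y : y = q (rep y).
Proof. exact: (proj2_sig (constructive_indefinite_description _ (q_surj y))). Qed.

Lemma rep_q p : rho n b1 b2 (rep (q p)) p.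
Proof. by apply/qmap_eq; rewrite -rep_spec. Qed.

Lemma rho_int k x l z : rho n b1 b2 (k, x) (l, z) -> x <> b1 -> x <> b2 -> (k, x) = (l, z).
Proof. by case=> [//|[[/= ? _]|[/= ? _]]]. Qed.


Hypothesis Hd : is_metric d.
Local Open Scope R_scope.

Definition beta := d b1 b2.

Lemma d_ge0 a b : 0 <= d a b. Proof. by case: Hd. Qed.
Lemma d_sym a b : d a b = d b a. Proof. by case: Hd => _ [_ []]. Qed.
Lemma d_tri a b c : d a c <= d a b + d b c. Proof. by case: Hd => _ [_ [_]]. Qed.
Lemma d_zero a b : d a b = 0 <-> a = b. Proof. by case: Hd => _ []. Qed.
Lemma d_refl a : d a a = 0. Proof. by apply/d_zero. Qed.
Lemma beta_pos : 0 < beta.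
Proof.
have := d_ge0 b1 b2. rewrite /beta. case/Rle_lt_or_eq_dec => //.
by move=> /esym /d_zero.
Qed.

Definition del (p p' : Z * T) : R :=
  if p.1 == p'.1 then Rmin (d p.2 p'.2) beta
  else if p'.1 == zs p.1 then Rmin (d p.2 b2 + d p'.2 b1) beta
  else if p.1 == zs p'.1 then Rmin (d p.2 b1 + d p'.2 b2) beta
  else beta.

Ltac zdestr := repeat (match goal with |- context[ ?a == ?b ] =>
   let E := fresh "E" in case: (a =P b) => E end).
Ltac zclean := repeat match goal with
 | H : ?a = ?a |- _ => clear H
 | H : ?a <> ?a |- _ => exfalso; exact: (H erefl)
 | H : zs ?a = ?a |- _ => exfalso; exact: (s_neq _ H)
 | H : ?a = zs ?a |- _ => exfalso; exact: (s_neq _ (esym H))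
 | H : zs (zs ?a) = ?a |- _ => exfalso; exact: (s2_neq _ H)
 | H : ?a = zs (zs ?a) |- _ => exfalso; exact: (s2_neq _ (esym H))
 | H : zs ?a = zs ?b |- _ => apply (zs_inj _ _) in H
 | H : ?x = _ |- _ => is_var x; subst x
 | H : _ = ?x |- _ => is_var x; subst x
end.

Ltac rmin_split := unfold Rmin in *; repeat match goal with |- context[Rle_dec ?a ?b] => destruct (Rle_dec a b) | H : context[Rle_dec ?a ?b] |- _ => destruct (Rle_dec a b) end.

Lemma del_sym p p' : del p p' = del p' p.
Proof.
case: p p' => [k x] [l y]; rewrite /del /=.
zdestr; zclean; have := d_sym x y; rmin_split; lra.
Qed.

Lemma del_tri p p' p'' : del p p'' <= del p p' + del p' p''.
Proof.
case: p p' p'' => [k x] [l y] [m z]; rewrite /del /=.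
have S := d_sym; have Tr := d_tri; have G := d_ge0.
have B := beta_pos; rewrite /beta in B *.
have := S x y; have := S x z; have := S y z; have := S b1 b2;
have := S x b1; have := S x b2; have := S y b1; have := S y b2; have := S z b1; have := S z b2.
have := Tr x y z; have := Tr x y b1; have := Tr x y b2; have := Tr x z b1; have := Tr x z b2;
have := Tr y x b1; have := Tr y x b2; have := Tr z y b1; have := Tr z y b2;
have := Tr b1 x b2; have := Tr b1 y b2; have := Tr b1 z b2;
have := Tr x z y; have := Tr x b1 z; have := Tr x b2 z; have := Tr z x b1; have := Tr z x b2; have := Tr y z b1; have := Tr y z b2.
have := G x y; have := G y z; have := G x z; have := G x b1; have := G x b2;
have := G y b1; have := G y b2; have := G z b1; have := G z b2.
intros; zdestr; zclean; rmin_split; lra.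
Qed.

Lemma del_ge0 p p' : 0 <= del p p'.
Proof.
have := beta_pos; rewrite /del /beta => B.
have G := d_ge0.
case: ifP => _; [|case: ifP => _; [|case: ifP => _]]; rmin_split;
  try (have := G p.2 p'.2); try (have := G p.2 b1); try (have := G p.2 b2);
  try (have := G p'.2 b1); try (have := G p'.2 b2); intros; lra.
Qed.

Lemma del_le_beta p p' : del p p' <= beta.
Proof.
rewrite /del; case: ifP => _; [|case: ifP => _; [|case: ifP => _]]; rmin_split; lra.
Qed.

Lemma del_rho_l p p' r : rho n b1 b2 p p' -> del p r = del p' r.
Proof.
have Hs : forall k z, del (k, b2) z = del (zs k, b1) z.
  move=> k [l z]; rewrite /del /=.
  have S := d_sym; have Tr := d_tri; have B := beta_pos; rewrite /beta in B *.
  have := S z b1; have := S z b2; have := S b1 b2; have := d_refl b1; have := d_refl b2;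
  have := Tr b1 z b2; have := Tr b2 z b1.
  have := d_ge0 z b1; have := d_ge0 z b2; intros; zdestr; zclean; rmin_split; lra.
case=> [->//|[[E1 [E2 E3]]|[E1 [E2 E3]]]].
- by case: p p' E1 E2 E3 => [k x] [l y] /= -> -> ->; apply: Hs.
- by case: p p' E1 E2 E3 => [k x] [l y] /= -> -> ->; rewrite Hs.
Qed.

Lemma del_rho p p' r r' : rho n b1 b2 p p' -> rho n b1 b2 r r' -> del p r = del p' r'.
Proof.
move=> H1 H2; rewrite (del_rho_l _ _ r H1) del_sym (del_rho_l _ _ p' H2) del_sym //.
Qed.

Lemma del_zero p p' : del p p' = 0 <-> rho n b1 b2 p p'.
Proof.
split.
- case: p p' => [k x] [l y]; rewrite /del /=.
  have G := d_ge0; have B := beta_pos; rewrite /beta in B *.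
  have := G x y; have := G x b1; have := G x b2; have := G y b1; have := G y b2.
  move=> g1 g2 g3 g4 g5; zdestr; zclean; rmin_split; move=> H; try lra.
  + by left; congr pair; apply (proj1 (d_zero _ _)); lra.
  + right; left; rewrite /=; split; [apply (proj1 (d_zero _ _)); lra|split; [apply (proj1 (d_zero _ _)); lra|done]].
  + right; right; rewrite /=; split; [apply (proj1 (d_zero _ _)); lra|split; [apply (proj1 (d_zero _ _)); lra|done]].
- move=> H; rewrite (del_rho_l _ _ p' H) /del eqxx d_refl.
  have := beta_pos; rmin_split; lra.
Qed.

Definition dY (y y' : Yq) : R := del (rep y) (rep y').

Lemma dY_q p p' : dY (q p) (q p') = del p p'.
Proof. by apply: del_rho; apply: rep_q. Qed.

Lemma dY_metric : is_metric dY.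
Proof.
split; [move=> ? ?; apply: del_ge0|split; [|split]].
- move=> y y'; rewrite /dY del_zero -qmap_eq -!rep_spec; done.
- by move=> y y'; rewrite /dY del_sym.
- by move=> y y' y''; apply: del_tri.
Qed.

Lemma ball_open_gen (X : Type) (dm : X -> X -> R) (x : X) e :
  is_metric dm -> metric_open dm (fun y => dm x y < e).
Proof.
case=> _ [_ [_ Tr]] y Hy; exists (e - dm x y); split; first lra.
move=> z Hz; have := Tr x y z; lra.
Qed.

Definition QO (U : Yq -> Prop) := Yn_topology n d b1 b2 U.

Lemma QO_slice U k x : QO U -> U (q (k, x)) ->
  exists e, 0 < e /\ forall y, d x y < e -> U (q (k, y)).
Proof.
move=> HU Hx; case: (HU (k, x) Hx) => V [W [_ [HW [HV [Wx HVW]]]]].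
case: (HW x Wx) => e [He HB]; exists e; split => // y Hy.
by apply: HVW => //; apply: HB.
Qed.

Lemma QO_intro U : (forall k x, U (q (k, x)) ->
  exists e, 0 < e /\ forall y, d x y < e -> U (q (k, y))) -> QO U.
Proof.
move=> H [k x] Hx; case: (H k x Hx) => e [He HB].
exists (fun a => a = k), (fun y => d x y < e); split=> //; split.
  by apply: ball_open_gen.
split=> //; split; first by rewrite d_refl.
by move=> a b -> Hb'; apply: HB.
Qed.

Lemma pred_ex (k : Z) : exists k', zs k' = k.
Proof. exists (GRing.add k (GRing.opp (GRing.one _))); rewrite /zs.
by rewrite -GRing.addrA GRing.addNr GRing.addr0. Qed.

Lemma QO_ball_b2 U k : QO U -> U (q (k, b2)) ->
  exists e, 0 < e /\ forall p', del (k, b2) p' < e -> U (q p').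
Proof.
move=> HU Hx.
have Hx' : U (q (zs k, b1)).
  suff -> : q (zs k, b1) = q (k, b2) by [].
  by apply/qmap_eq; right; right.
case: (QO_slice _ _ _ HU Hx) => e1 [He1 H1].
case: (QO_slice _ _ _ HU Hx') => e2 [He2 H2].
have B := beta_pos.
exists (Rmin e1 (Rmin e2 beta)); split; first by rmin_split; lra.
move=> [l z]; rewrite /del /=.
have := d_ge0 z b2; have := d_sym z b1; have := d_refl b2; have := d_sym b2 b1.
move=> g1 g2 g3 g4; zdestr; zclean; rewrite /beta in B *; rmin_split; move=> Hl; try lra.
all: first [by apply: H1; lra | by apply: H2; lra].
Qed.


Lemma QO_ball U p : QO U -> U (q p) ->
  exists e, 0 < e /\ forall p', del p p' < e -> U (q p').
Proof.
move=> HU; case: p => k x.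
case: (classic (x = b2)) => [-> |n2]; first by apply: QO_ball_b2.
case: (classic (x = b1)) => [-> |n1].
  case: (pred_ex k) => k' Ek Hx.
  have E : rho n b1 b2 (k', b2) (k, b1) by right; left; rewrite -Ek.
  have Hx' : U (q (k', b2)) by move/qmap_eq: E => ->.
  case: (QO_ball_b2 _ _ HU Hx') => e [He H]; exists e; split=> // p' Hp'.
  by apply: H; rewrite (del_rho_l _ _ p' E).
move=> Hx; case: (QO_slice _ _ _ HU Hx) => e1 [He1 H1].
have B := beta_pos.
have P1 : 0 < d x b1.
  have := d_ge0 x b1; case/Rle_lt_or_eq_dec => // /esym /d_zero //.
have P2 : 0 < d x b2.
  have := d_ge0 x b2; case/Rle_lt_or_eq_dec => // /esym /d_zero //.
exists (Rmin e1 (Rmin (d x b1) (Rmin (d x b2) beta))); split; first by rmin_split; lra.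
move=> [l z]; rewrite /del /=.
have := d_ge0 z b2; have := d_ge0 z b1.
move=> g1 g2; zdestr; zclean; rewrite /beta in B *; rmin_split; move=> Hl; try lra.
all: by apply: H1; lra.
Qed.

Lemma QO_iff U : QO U <-> metric_open dY U.
Proof.
split.
- move=> HU y Hy; rewrite (rep_spec y) in Hy.
  case: (QO_ball _ _ HU Hy) => e [He H]; exists e; split=> // y' Hy'.
  rewrite (rep_spec y'); apply: H. by rewrite /dY in Hy'.
- move=> HU; apply: QO_intro => k x Hx.
  case: (HU _ Hx) => e [He H].
  have B := beta_pos.
  exists (Rmin e beta); split; first by rmin_split; lra.
  move=> y Hy; apply: H; rewrite dY_q /del /= eqxx.
  rmin_split; lra.
Qed.


Lemma zs_ind (P : Z -> Prop) : P (GRing.zero : Z) -> (forall k, P k -> P (zs k)) -> forall k, P k.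
Proof.
move=> P0 PS k.
have H : forall t : nat, P (GRing.natmul (GRing.one _) t).
  elim=> [//|t IH]. rewrite GRing.mulrSr. by apply: PS.
by rewrite -(natr_Zp k); apply: H.
Qed.

Lemma in_seqIn (s : list Z) (x : Z) : x \in s -> List.In x s.
Proof.
elim: s => [//|a s IH]; rewrite inE => /orP [/eqP ->|/IH]; [by left|by right].
Qed.

Hypothesis Hcomp : Defs.compact (metric_open d).
Hypothesis Hconn : Defs.connected (metric_open d).

Lemma cover_k (F : (Yq -> Prop) -> Prop) k :
  (forall U, F U -> QO U) -> (forall y, exists U, F U /\ U y) ->
  exists L, (forall U, List.In U L -> F U) /\ forall x, exists U, List.In U L /\ U (q (k, x)).
Proof.
move=> HF Hcov.
pose FT W := exists U, F U /\ W = (fun x => U (q (k, x))).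
have [l [Hl Hlc]] : exists l : list (T -> Prop),
    (forall W, List.In W l -> FT W) /\ (forall x, exists W, List.In W l /\ W x).
  apply: Hcomp.
  - move=> W [U [FU ->]] x Hx. apply: QO_slice => //. by apply: HF.
  - move=> x; case: (Hcov (q (k, x))) => U [FU HU].
    by exists (fun x => U (q (k, x))); split=> //; exists U.
have [L [HL HLc]] : exists L, (forall U, List.In U L -> F U) /\
    forall W, List.In W l -> exists U, List.In U L /\ W = (fun x => U (q (k, x))).
  elim: l Hl {Hlc} => [|W l IH] Hl.
    by exists nil; split.
  case: IH => [W' HW'|L [HL1 HL2]]; first by apply: Hl; right.
  case: (Hl W (or_introl erefl)) => U [FU EU].
  exists (U :: L); split.
    by move=> U' [<-|/HL1].
  move=> W' [<-|/HL2 [U' [H1 H2]]]; first by exists U; split=> //; left.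
  by exists U'; split=> //; right.
exists L; split=> // x.
case: (Hlc x) => W [HW Wx]; case: (HLc W HW) => U [HU EU].
by exists U; split=> //; rewrite EU in Wx.
Qed.

Lemma Y_compact : Defs.compact (Yn_topology n d b1 b2).
Proof.
move=> F HF Hcov.
have H : forall ks : list Z, exists L, (forall U, List.In U L -> F U) /\
    forall k, List.In k ks -> forall x, exists U, List.In U L /\ U (q (k, x)).
  elim=> [|k ks [L [HL1 HL2]]]; first by exists nil.
  case: (cover_k F k HF Hcov) => L' [HL1' HL2'].
  exists (L ++ L'); split.
    by move=> U /in_app_iff [/HL1|/HL1'].
  move=> k' [<- x|Hk x].
    by case: (HL2' x) => U [H1 H2]; exists U; split=> //; apply/in_app_iff; right.
  by case: (HL2 k' Hk x) => U [H1 H2]; exists U; split=> //; apply/in_app_iff; left.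
case: (H (fintype.enum (fun _ : Z => true))) => L [HL1 HL2]; exists L; split=> // y.
rewrite (rep_spec y); case: (rep y) => k x.
by apply: HL2; apply: in_seqIn; rewrite mem_enum.
Qed.

Lemma Y_connected : Defs.connected (Yn_topology n d b1 b2).
Proof.
move=> U HU HC.
have Hk : forall k, (forall x, U (q (k, x))) \/ (forall x, ~ U (q (k, x))).
  move=> k; apply: (Hconn (fun x => U (q (k, x)))).
  - by move=> x Hx; case: (QO_slice _ _ _ HU Hx) => e [? ?]; exists e.
  - by move=> x Hx; case: (QO_slice _ _ _ HC Hx) => e [? ?]; exists e.
have Ej : forall k, q (k, b2) = q (zs k, b1).
  by move=> k; apply/qmap_eq; right; left.
case: (classic (U (q ((GRing.zero : Z), b1)))) => H0.
- left => y; rewrite (rep_spec y); case: (rep y) => k x; move: k x.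
  apply: zs_ind.
    by case: (Hk (GRing.zero : Z)) => // Hn0; case: (Hn0 b1).
  move=> k IH; case: (Hk (zs k)) => // Hn0; case: (Hn0 b1). by rewrite -Ej.
- right => y; rewrite (rep_spec y); case: (rep y) => k x; move: k x.
  apply: zs_ind.
    by case: (Hk (GRing.zero : Z)) => // Hn0; case: H0.
  move=> k IH; case: (Hk (zs k)) => // Hn0; case: (IH b2). by rewrite Ej.
Qed.

Lemma Y_continuum : continuum (Yn_topology n d b1 b2).
Proof.
split; first exact: Y_compact.
split; first exact: Y_connected.
by exists dY; split; [apply: dY_metric | apply: QO_iff].
Qed.


Definition phi (m : Z) (y : Yq) : Yq :=
  q (GRing.add m (rep y).1, (rep y).2).

Lemma rho_shift m p p' : rho n b1 b2 p p' ->
  rho n b1 b2 (GRing.add m p.1, p.2) (GRing.add m p'.1, p'.2).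
Proof.
case: p p' => [k x] [l y] /=.
case=> [[-> ->]|[[/= E1 [E2 E3]]|[/= E1 [E2 E3]]]]; [by left| right; left | right; right].
- by rewrite /= E1 E2 E3 GRing.addrA.
- by rewrite /= E1 E2 E3 GRing.addrA.
Qed.

Lemma phi_q m k x : phi m (q (k, x)) = q (GRing.add m k, x).
Proof.
rewrite /phi; apply/qmap_eq.
exact: (rho_shift m _ _ (rep_q (k, x))).
Qed.

Lemma phi_cont m : Defs.continuous (Yn_topology n d b1 b2) (Yn_topology n d b1 b2) (phi m).
Proof.
move=> V HV; apply: (QO_intro (fun y => V (phi m y))) => k x Hx.
rewrite phi_q in Hx; case: (QO_slice _ _ _ HV Hx) => e [He H].
by exists e; split=> // y Hy; rewrite phi_q; apply: H.
Qed.

Lemma phi_add m1 m2 y : phi (GRing.add m1 m2) y = phi m1 (phi m2 y).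
Proof. by rewrite (rep_spec y); case: (rep y) => k x; rewrite !phi_q GRing.addrA. Qed.

Lemma phi0 y : phi (GRing.zero : Z) y = y.
Proof. by rewrite (rep_spec y); case: (rep y) => k x; rewrite !phi_q GRing.add0r. Qed.

Lemma phi_homeo m : homeomorphism (Yn_topology n d b1 b2) (phi m).
Proof.
exists (phi (GRing.opp m)); split; [|split; [|split]]; try apply: phi_cont.
- by move=> y; rewrite -phi_add GRing.addNr phi0.
- by move=> y; rewrite -phi_add GRing.addrN phi0.
Qed.

Lemma interior_ex : exists x, x <> b1 /\ x <> b2.
Proof.
apply: NNPP => H.
have Hall : forall x, x = b1 \/ x = b2.
  move=> x; apply: NNPP => H'; apply: H; exists x.
  by split=> E; apply: H'; [left|right].
have B := beta_pos.
case: (Hconn (fun x => x = b1)).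
- move=> x ->; exists beta; split=> // y Hy.
  case: (Hall y) => // E; rewrite E /beta in Hy; lra.
- move=> x Hx; exists (d x b1); split.
    have := d_ge0 x b1; case/Rle_lt_or_eq_dec => // /esym /d_zero //.
  move=> y Hy Ey; rewrite Ey in Hy; lra.
- by move=> /(_ b2) /esym.
- by move=> /(_ b1).
Qed.


Definition J0 : Yq := q (GRing.zero : Z, b1).

Lemma val_zs (l : Z) : zs l <> GRing.zero -> nat_of_ord (zs l) = (nat_of_ord l).+1.
Proof.
move=> H.
have E : nat_of_ord (zs l) = ((nat_of_ord l).+1 %% (Zp_trunc n).+2)%N.
  by rewrite /zs /= (modn_small (m := 1)) ?addn1 // ltnS.
have := ltn_ord l; rewrite -/(nat_of_ord l) => Hl.
have := N_gt2.
case: (ltngtP (nat_of_ord l).+1 (Zp_trunc n).+2) => Hc HN.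
- by rewrite E modn_small.
- by exfalso; move: Hl Hc; lia.
- exfalso; apply: H; apply: val_inj; move: E; rewrite Hc modnn => E. exact: E.
Qed.

Definition fj (j : Z) (p : Z * T) : T :=
  if p.1 == j then p.2 else if (nat_of_ord p.1 < nat_of_ord j)%N then b1 else b2.


Lemma fj_step j l : zs l <> GRing.zero -> fj j (l, b2) = fj j (zs l, b1).
Proof.
move=> Hl; move: (val_zs l Hl); rewrite /fj -!val_eqE /= => ->.
move: (nat_of_ord l) (nat_of_ord j) => a c.
repeat case: ifP; move=> *; try done; exfalso; lia.
Qed.

Lemma fj_inv j p p' : rho n b1 b2 p p' -> q p <> J0 -> fj j p = fj j p'.
Proof.
have Hz : forall l, q (l, b2) <> J0 -> zs l <> GRing.zero.
  move=> l H E; apply: H; rewrite /J0 -E; apply/qmap_eq; right; left; done.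
case=> [->//|[[E1 [E2 E3]]|[E1 [E2 E3]]]].
- case: p p' E1 E2 E3 => [k x] [l y] /= -> -> -> H.
  by apply: fj_step; apply: Hz.
- case: p p' E1 E2 E3 => [k x] [l y] /= -> -> -> H.
  have H' : q (l, b2) <> J0.
    move=> E; apply: H; rewrite -E; apply/qmap_eq; right; right; done.
  by rewrite fj_step //; apply: Hz.
Qed.

Lemma dist_pos x a : x <> a -> 0 < d x a.
Proof. move=> H; have := d_ge0 x a; case/Rle_lt_or_eq_dec => // /esym /d_zero //. Qed.

Definition dd (x a : T) : R :=
  match excluded_middle_informative (x = a) with left _ => 1 | right _ => d x a end.

Lemma dd_pos x a : 0 < dd x a.
Proof. rewrite /dd; case: excluded_middle_informative => H; [lra|exact: dist_pos]. Qed.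

Lemma dd_le x a y : d x y < dd x a -> y = a -> x = a.
Proof.
rewrite /dd; case: excluded_middle_informative => // H Hy E; rewrite E in Hy; lra.
Qed.

Lemma T1_slice l x c : q (l, x) <> c ->
  exists e, 0 < e /\ forall y, d x y < e -> q (l, y) <> c.
Proof.
rewrite (rep_spec c); case: (rep c) => m z Hx.
have := dd_pos x z; have := dd_pos x b1; have := dd_pos x b2 => P1 P2 P3.
exists (Rmin (dd x z) (Rmin (dd x b1) (dd x b2))); split; first by rmin_split; lra.
move=> y Hy /qmap_eq E; apply: Hx; apply/qmap_eq.
have H1 : d x y < dd x z by move: Hy; rmin_split; lra.
have H2 : d x y < dd x b1 by move: Hy; rmin_split; lra.
have H3 : d x y < dd x b2 by move: Hy; rmin_split; lra.
case: E => [[El Ey]|[[/= E1 [E2 E3]]|[/= E1 [E2 E3]]]].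
- by rewrite El (dd_le _ _ _ H1 Ey); left.
- by rewrite (dd_le _ _ _ H3 E1); right; left.
- by rewrite (dd_le _ _ _ H2 E1); right; right.
Qed.

Lemma mopen_ext (U V : T -> Prop) : (forall x, U x <-> V x) -> metric_open d U -> metric_open d V.
Proof.
move=> H HU x /H Hx; case: (HU x Hx) => e [He He']; exists e; split=> // y Hy.
by apply/H; apply: He'.
Qed.

Lemma q_cont k : Defs.continuous (metric_open d) (Yn_topology n d b1 b2) (fun x => q (k, x)).
Proof.
move=> V HV x Hx; case: (QO_slice _ _ _ HV Hx) => e [He H]; by exists e.
Qed.


Local Notation QT := (Yn_topology n d b1 b2).

Lemma density x e : 0 < e -> exists z, d x z < e /\ z <> b1 /\ z <> b2.
Proof.
move=> He.
case: (classic (x <> b1 /\ x <> b2)) => [[H1 H2]|Hx].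
  by exists x; rewrite d_refl.
have Hx' : x = b1 \/ x = b2.
  by apply: NNPP => H; apply: Hx; split=> E; apply: H; [left|right].
have B := beta_pos.
apply: NNPP => Hno.
have Hball : forall w, d x w < Rmin e beta -> w = x.
  move=> w Hw; apply: NNPP => Hwx; apply: Hno; exists w.
  have Hw1 : d x w < e by move: Hw; rmin_split; lra.
  have Hw2 : d x w < beta by move: Hw; rmin_split; lra.
  split=> //; split=> E; rewrite E in Hw2 Hwx;
    case: Hx' => Ex; rewrite Ex in Hw2 Hwx; try (by apply: Hwx);
    rewrite /beta ?(d_sym b2 b1) in Hw2; lra.
case: (Hconn (fun y => y = x)).
- move=> y ->; exists (Rmin e beta); split; first by rmin_split; lra.
  by move=> w /Hball.
- move=> y Hy; exists (d y x); split; first by apply: dist_pos.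
  move=> w Hw E; rewrite E in Hw; lra.
- move=> H; apply: Hb; by rewrite (H b1) (H b2).
- by move=> /(_ x).
Qed.

Lemma dense_eq (G1 G2 : T -> Yq) :
  Defs.continuous (metric_open d) QT G1 -> Defs.continuous (metric_open d) QT G2 ->
  (forall x, x <> b1 -> x <> b2 -> G1 x = G2 x) -> forall x, G1 x = G2 x.
Proof.
move=> C1 C2 H x; apply: NNPP => Hne.
have M := dY_metric; case: (M) => M0 [Mz [Ms Mt]].
have Hr : 0 < dY (G1 x) (G2 x).
  have := M0 (G1 x) (G2 x); case/Rle_lt_or_eq_dec => // /esym /Mz //.
set r := dY (G1 x) (G2 x) in Hr.
have O1 : QO (fun y => dY (G1 x) y < r / 2).
  by apply/QO_iff; apply: ball_open_gen.
have O2 : QO (fun y => dY (G2 x) y < r / 2).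
  by apply/QO_iff; apply: ball_open_gen.
have D1 : dY (G1 x) (G1 x) = 0 by apply/Mz.
have D2 : dY (G2 x) (G2 x) = 0 by apply/Mz.
have X1 : dY (G1 x) (G1 x) < r / 2 by rewrite D1; lra.
have X2 : dY (G2 x) (G2 x) < r / 2 by rewrite D2; lra.
have [e1 [He1 H1]] := C1 (fun y => dY (G1 x) y < r / 2) O1 x X1.
have [e2 [He2 H2]] := C2 (fun y => dY (G2 x) y < r / 2) O2 x X2.
have He : 0 < Rmin e1 e2 by rmin_split; lra.
have [z [Hz [Hz1 Hz2]]] := density x (Rmin e1 e2) He.
have Hz' : d x z < e1 by move: Hz; rmin_split; lra.
have Hz'' : d x z < e2 by move: Hz; rmin_split; lra.
have A1 := H1 z Hz'.
have A2 := H2 z Hz''.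
rewrite /= (H z Hz1 Hz2) in A1 A2.
have := Mt (G1 x) (G2 z) (G2 x); rewrite (Ms (G2 z) (G2 x)) -/r; lra.
Qed.

Lemma Fj_cont (h : Yq -> Yq) (Hc : Defs.continuous QT QT h) k j
  (Hk : forall x, h (q (k, x)) <> J0) :
  Defs.continuous (metric_open d) (metric_open d) (fun x => fj j (rep (h (q (k, x))))).
Proof.
move=> U HU.
pose O := fun y => y <> J0 /\ U (fj j (rep y)).
have Ex : forall p, q p <> J0 -> fj j (rep (q p)) = fj j p.
  by move=> p Hp; apply: fj_inv; [apply: rep_q|rewrite -rep_spec].
have HO : QO O.
  apply: QO_intro => l x [Hx HUx].
  rewrite Ex // in HUx.
  case: (T1_slice l x J0 Hx) => e1 [He1 H1].
  have [e2 [He2 H2]] : exists e2, 0 < e2 /\ forall y, d x y < e2 -> U (fj j (l, y)).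
    move: HUx; rewrite /fj /=; case: ifP => _ HUx.
      by case: (HU x HUx) => e [He H]; exists e.
    by exists 1; split=> //; lra.
  exists (Rmin e1 e2); split; first by rmin_split; lra.
  move=> y Hy; have Hy1 : d x y < e1 by move: Hy; rmin_split; lra.
  have Hy2 : d x y < e2 by move: Hy; rmin_split; lra.
  split; first exact: H1.
  by rewrite Ex; [apply: H2|apply: H1].
have := q_cont k _ (Hc O HO).
apply: mopen_ext => x; split; [by case|move=> H; split=> //; apply: Hk].
Qed.


Hypothesis Hrig : forall f : T -> T, Defs.continuous (metric_open d) (metric_open d) f ->
    (forall x, f x = x) \/ (exists c, forall x, f x = c).

Lemma fj_int j p z : fj j p = z -> z <> b1 -> z <> b2 -> p = (j, z).
Proof.
case: p => l x; rewrite /fj /=; case: (l =P j) => [-> -> //|_].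
by case: ifP => _ <-.
Qed.

Lemma fj_end j l z : z = b1 \/ z = b2 -> fj j (l, z) = b1 \/ fj j (l, z) = b2.
Proof. by rewrite /fj /=; case: ifP => _ //; case: ifP => _; [left|right]. Qed.

Lemma qk_neq k : q (k, b1) = q (k, b2) -> False.
Proof.
move/qmap_eq => [[E]|[[/= E _]|[/= _ [_ E]]]]; [by apply: Hb|by apply: Hb|].
exact: (s_neq _ (esym E)).
Qed.

Lemma q_int_end a : zs a <> GRing.zero -> q (a, b2) <> J0.
Proof.
move=> H E; apply: H; move/qmap_eq: E => [[_ E]|[[/= _ [_ E]]|[/= E _]]].
- by case: Hb.
- by [].
- by case: Hb.
Qed.

Lemma GL (h : Yq -> Yq) (Hc : Defs.continuous QT QT h)
  (Hinj : forall y y', h y = h y' -> y = y') k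
  (Hk : forall x, h (q (k, x)) <> J0) : exists j, forall x, h (q (k, x)) = q (j, x).
Proof.
pose F j x := fj j (rep (h (q (k, x)))).
have HF : forall j, (forall x, F j x = x) \/ (exists c, forall x, F j x = c).
  by move=> j; apply: Hrig; apply: Fj_cont.
have Hnc : ~ (exists c, forall x, h (q (k, x)) = c).
  case=> c Hc'; apply: (qk_neq k); apply: Hinj; by rewrite !Hc'.
have Ex : forall j x p, h (q (k, x)) = q p -> F j x = fj j p.
  move=> j x p E; rewrite /F E; apply: fj_inv; first exact: rep_q.
  by rewrite -rep_spec -E.
have HJ : forall a x, h (q (k, x)) = q (a, b2) -> zs a <> GRing.zero.
  move=> a x E Ea; apply: (Hk x); rewrite E /J0 -Ea; apply/qmap_eq; right; left; done.
case: interior_ex => x0 [x0a x0b].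
case: (classic (exists j, forall x, F j x = x)) => [[j Hj]|Hno].
- exists j; apply: (dense_eq (fun x => h (q (k, x))) (fun x => q (j, x))).
  + by move=> V HV; exact: (q_cont k (fun y => V (h y)) (Hc V HV)).
  + exact: q_cont.
  + move=> x H1 H2; have := Hj x; rewrite /F => /fj_int E.
    by rewrite (rep_spec (h _)) E.
- have Hconst : forall j, exists c, forall x, F j x = c.
    by move=> j; case: (HF j) => // Hid; case: Hno; exists j.
  exfalso; apply: Hnc.
  case E0 : (rep (h (q (k, x0)))) => [l z].
  have H0 : h (q (k, x0)) = q (l, z) by rewrite (rep_spec (h _)) E0.
  case: (classic (z <> b1 /\ z <> b2)) => [[z1 z2]|Hz].
  + case: (Hconst l) => c Hcl.
    have Fl0 : F l x0 = z by rewrite (Ex _ _ _ H0) /fj /= eqxx.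
    exists (q (l, z)) => x; have := Hcl x; rewrite -(Hcl x0) Fl0 /F => /fj_int E.
    by rewrite (rep_spec (h _)) (E z1 z2).
  + have Hz' : z = b1 \/ z = b2.
      by apply: NNPP => H; apply: Hz; split=> E; apply: H; [left|right].
    have HA : forall x, exists a, h (q (k, x)) = q (a, b2).
      move=> x; case E1 : (rep (h (q (k, x)))) => [l' z'].
      have H1 : h (q (k, x)) = q (l', z') by rewrite (rep_spec (h _)) E1.
      case: (classic (z' <> b1 /\ z' <> b2)) => [[z1 z2]|Hz2].
      * exfalso; case: (Hconst l') => c Hcl.
        have A : F l' x = z' by rewrite (Ex _ _ _ H1) /fj /= eqxx.
        have B : F l' x0 = fj l' (l, z) := Ex _ _ _ H0.
        case: (fj_end l' l z Hz') => Eb; rewrite -B (Hcl x0) -(Hcl x) A in Eb; by [apply: z1|apply: z2].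
      * case: (classic (z' = b2)) => [Ez|Ez]; first by exists l'; rewrite H1 Ez.
        have Ez1 : z' = b1 by apply: NNPP => H; apply: Hz2; split.
        case: (pred_ex l') => a Ea; exists a; rewrite H1 Ez1 -Ea.
        by apply/qmap_eq; right; right.
    case: (HA x0) => a0 Ha0.
    exists (q (a0, b2)) => x; case: (HA x) => a Ha; rewrite Ha.
    suff -> : a = a0 by [].
    have Fa := fun j => Ex j _ _ Ha.
    have Fa0 := fun j => Ex j _ _ Ha0.
    case: (ltngtP (nat_of_ord a) (nat_of_ord a0)) => Hlt.
    * exfalso; case: (Hconst a0) => c Hcl.
      have := Hcl x; rewrite -(Hcl x0) Fa Fa0 /fj /= eqxx.
      have -> : (a == a0) = false by apply/negbTE; rewrite -val_eqE /= neq_ltn Hlt.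
      by rewrite Hlt.
    * exfalso; case: (Hconst a) => c Hcl.
      have := Hcl x; rewrite -(Hcl x0) Fa Fa0 /fj /= eqxx.
      have -> : (a0 == a) = false by apply/negbTE; rewrite -val_eqE /= neq_ltn Hlt.
      by rewrite Hlt => /esym.
    * by apply: val_inj.
Qed.


Lemma classify (h : Yq -> Yq) : homeomorphism QT h -> exists m, h = phi m.
Proof.
case=> g [Hgh [Hhg [Hc Hgc]]].
have Hinj : forall y y', h y = h y' -> y = y'.
  by move=> y y' E; rewrite -(Hgh y) -(Hgh y') E.
have GLi : forall i k, (forall x, h (q (k, x)) <> q (i, b1)) ->
    exists j, forall x, h (q (k, x)) = q (j, x).
  move=> i k Hk.
  pose h' := fun y => phi (GRing.opp i) (h y).
  have Hc' : Defs.continuous QT QT h'.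
    by move=> V HV; apply: (Hc (fun y => V (phi (GRing.opp i) y))); apply: phi_cont.
  have Hinj' : forall y y', h' y = h' y' -> y = y'.
    move=> y y' E; apply: Hinj.
    by rewrite -(phi0 (h y)) -(phi0 (h y')) -(GRing.addrN i) !phi_add /h' -/(h' y) E.
  case: (GL h' Hc' Hinj' k).
    move=> x E; apply: (Hk x).
    by rewrite -(phi0 (h _)) -(GRing.addrN i) phi_add -/(h' _) E /J0 phi_q GRing.addr0.
  move=> j Hj; exists (GRing.add i j) => x.
  by rewrite -phi_q -Hj /h' -phi_add GRing.addrN phi0.
pose good k := exists i, forall x, h (q (k, x)) <> q (i, b1).
have Hnot : forall k, ~ good k -> forall i, exists x, h (q (k, x)) = q (i, b1).
  move=> k Hk i; apply: NNPP => H; apply: Hk; exists i => x E; apply: H; by exists x.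
have Hj01 : q ((GRing.zero : Z), b1) = q (zs GRing.zero, b1) -> False.
  move/qmap_eq => [E|[[/= E _]|[/= _ [E _]]]]; [exact: (s_neq _ (esym (congr1 fst E)))|exact: (Hb E)|exact: (Hb E)].
have bad2 : forall k1 k2, ~ good k1 -> ~ good k2 -> k1 <> k2 -> False.
  move=> k1 k2 H1 H2 Hne.
  case: (Hnot _ H1 GRing.zero) => x0 E0; case: (Hnot _ H2 GRing.zero) => y0 F0.
  case: (Hnot _ H1 (zs GRing.zero)) => x1 E1; case: (Hnot _ H2 (zs GRing.zero)) => y1 F1.
  have /qmap_eq R0 : q (k1, x0) = q (k2, y0) by apply: Hinj; rewrite E0 F0.
  have /qmap_eq R1 : q (k1, x1) = q (k2, y1) by apply: Hinj; rewrite E1 F1.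
  case: R0 => [/(congr1 fst) /Hne //|[[/= A1 [A2 A3]]|[/= A1 [A2 A3]]]];
  case: R1 => [/(congr1 fst) /Hne //|[[/= B1 [B2 B3]]|[/= B1 [B2 B3]]]].
  - by apply: Hj01; rewrite -E0 -E1 A1 B1.
  - by apply: (s2_neq k1); rewrite /zs -A3; exact: (esym B3).
  - by apply: (s2_neq k2); rewrite /zs -A3; exact: (esym B3).
  - by apply: Hj01; rewrite -E0 -E1 A1 B1.
have back : forall k, good (zs k) -> good k.
  move=> k [i Hi]; case: (GLi i _ Hi) => s Hs.
  exists (zs s) => x E.
  have E' : q (zs s, b1) = h (q (zs k, b2)).
    by rewrite Hs; apply/qmap_eq; right; right.
  rewrite E' in E; move/Hinj/qmap_eq: E => [E|[[/= _ [E _]]|[/= _ [_ E]]]].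
  - exact: (s_neq _ (esym (congr1 fst E))).
  - by case: Hb.
  - exact: (s2_neq _ (esym E)).
have allgood : forall k, good k.
  move=> k; apply: NNPP => Hk.
  apply: (bad2 k (zs k) Hk) => [Hk'|E]; [by apply: Hk; apply: back|exact: (s_neq _ (esym E))].
have Hsig : forall k, { j | forall x, h (q (k, x)) = q (j, x) }.
  move=> k; apply: constructive_indefinite_description.
  by case: (allgood k) => i Hi; apply: (GLi i).
pose sg k := proj1_sig (Hsig k).
have Hsg : forall k x, h (q (k, x)) = q (sg k, x) by move=> k; exact: (proj2_sig (Hsig k)).
have Hstep : forall k, sg (zs k) = zs (sg k).
  move=> k.
  have : q (sg k, b2) = q (sg (zs k), b1).
    rewrite -!Hsg; congr h; apply/qmap_eq; right; left; done.
  move/qmap_eq => [/(congr1 snd) /= E|[[/= _ [_ E]]|[/= E _]]]; [by case: Hb|done|by case: Hb].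
exists (sg GRing.zero).
have Hm : forall k, sg k = GRing.add (sg GRing.zero) k.
  apply: zs_ind; first by rewrite GRing.addr0.
  by move=> k IH; rewrite Hstep IH /zs GRing.addrA.
apply: functional_extensionality => y.
by rewrite (rep_spec y); case: (rep y) => k x; rewrite Hsg phi_q -Hm.
Qed.

End Main.

Theorem mainTheorem2 (n : nat) (T : Type) (d : T -> T -> R) (b1 b2 : T) :
  (2 < n)%nat ->
  de_Groot_continuum d ->
  b1 <> b2 ->
  continuum (Yn_topology n d b1 b2) /\
  exists phi : 'Z_n -> (Yn n b1 b2 -> Yn n b1 b2),
    (forall (m k : 'Z_n) (x : T),
        phi m (qmap (rho n b1 b2) (k, x)) =
        qmap (rho n b1 b2) (GRing.add m k, x)) /\
    (forall m, homeomorphism (Yn_topology n d b1 b2) (phi m)) /\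
    (forall m1 m2 y, phi (GRing.add m1 m2) y = phi m1 (phi m2 y)) /\
    (forall m1 m2, phi m1 = phi m2 -> m1 = m2) /\
    (forall h, homeomorphism (Yn_topology n d b1 b2) h ->
       exists m, h = phi m).
Proof.
move=> Hn [Hd [Hcomp [Hconn [_ Hrig]]]] Hb.
split; first exact: Y_continuum.
exists (phi n T b1 b2); split; first exact: phi_q.
split; first exact: phi_homeo.
split; first exact: phi_add.
split.
  move=> m1 m2 E.
  case: (interior_ex T d b1 b2 Hb Hd Hconn) => x [x1 x2].
  have := congr1 (fun f => f (qmap (rho n b1 b2) ((GRing.zero : 'Z_n), x))) E.
  rewrite /= !(phi_q n T b1 b2 Hb) !GRing.addr0 => /(proj1 (qmap_eq n T b1 b2 Hb _ _)) R0.
  have E' := rho_int n T b1 b2 _ _ _ _ R0 x1 x2.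
  by case: E'.
exact: classify.
Qed.
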